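(* Let $Q=\{x\in\mathbb{R}^{n+1}:\sum_{i=1}^{n+1}x_i^2/a_i=1\}$ with $0<a_1<\dots<a_{n+1}$. If a nonsingular periodic billiard trajectory inside $Q$ has odd period, then its first caustic $Q_{\lambda_1}$ is an ellipsoid, i.e. $\lambda_1\in(0,a_1)$. In other words, among all nonsingular billiard trajectories inside $Q$, only those with an ellipsoid as caustic can have odd period.
   Context: Confocal quadrics: $Q_\mu=\{\sum x_i^2/(a_i-\mu)=1\}$; every line of a billiard trajectory inside $Q$ is tangent to $n$ confocal quadrics $Q_{\lambda_1},\ldots,Q_{\lambda_n}$ (caustics), $\lambda_1<\dots<\lambda_n$. The trajectory is nonsingular when $\lambda$ lies in $\{0<\lambda_1<\dots<\lambda_n,\ \lambda_i\in(a_{i-1},a_i)\cup(a_i,a_{i+1})\}$, $a_0=0$. $Q_\mu$ is an ellipsoid exactly when $0<\mu<a_1$. *)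

(* Defs.v *)
From HB Require Import structures.
From mathcomp Require Import all_boot all_order all_algebra.
From mathcomp Require Import reals.
Set Implicit Arguments. Unset Strict Implicit. Unset Printing Implicit Defensive.
Import Order.TTheory GRing.Theory Num.Theory.
Local Open Scope ring_scope.

Section Billiards.
Variables (R : realType) (n : nat).
(* Points of R^(n+1) are functions 'I_n.+1 -> R; coordinate i (0-based)
   corresponds to the paper's coordinate i+1.  a i is the paper's a_(i+1). *)
Variable a : 'I_n.+1 -> R.

Definition dot (x y : 'I_n.+1 -> R) : R := \sum_i x i * y i.

Definition on_Q (x : 'I_n.+1 -> R) : Prop := \sum_i x i ^+ 2 / a i = 1.

(* (half) gradient of the defining function of Q at x: a normal vector *)
Definition normalQ (x : 'I_n.+1 -> R) : 'I_n.+1 -> R := fun i => x i / a i.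

Definition seg (p : nat -> 'I_n.+1 -> R) (k : nat) : 'I_n.+1 -> R :=
  fun i => p k.+1 i - p k i.

Definition reflect_in (N u : 'I_n.+1 -> R) : 'I_n.+1 -> R :=
  fun i => u i - 2 * dot u N / dot N N * N i.

Definition billiard_traj (p : nat -> 'I_n.+1 -> R) : Prop :=
  (forall k, on_Q (p k)) /\
  (forall k, p k.+1 <> p k) /\
  (forall k, exists c : R, 0 < c /\
       seg p k.+1 = (fun i => c * reflect_in (normalQ (p k.+1)) (seg p k) i)).

(* The line {x + t v} is tangent to the confocal quadric
   Q_mu = { sum y_i^2/(a_i - mu) = 1 } (mu not among the a_i): the quadratic
   equation  sum (x_i + t v_i)^2/(a_i - mu) = 1  in t has a double root,
   i.e. its discriminant B^2 - A C vanishes. *)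
Definition tangent_confocal (x v : 'I_n.+1 -> R) (mu : R) : Prop :=
  (forall i, a i != mu) /\
  let A := \sum_i v i ^+ 2 / (a i - mu) in
  let B := \sum_i x i * v i / (a i - mu) in
  let C := \sum_i x i ^+ 2 / (a i - mu) - 1 in
  B ^+ 2 - A * C = 0.

(* lam_1 < ... < lam_n (0-based: lam 0 < ... < lam (n-1)) are exactly the
   parameters of the confocal quadrics tangent to the line {x + t v}. *)
Definition caustic_params (x v : 'I_n.+1 -> R) (lam : 'I_n -> R) : Prop :=
  (forall i j : 'I_n, (i < j)%N -> lam i < lam j) /\
  (forall mu : R, tangent_confocal x v mu <-> exists i, lam i = mu).

(* paper's a_k for k = 0..n+1, with a_0 = 0 *)
Definition apaper (k : nat) : R := if k is k'.+1 then a (inord k') else 0.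

Definition nonsingular (lam : 'I_n -> R) : Prop :=
  (forall i : 'I_n, (i : nat) = 0%N -> 0 < lam i) /\
  (forall i : 'I_n,
     (apaper i < lam i < apaper i.+1) \/ (apaper i.+1 < lam i < apaper i.+2)).

End Billiards.

(* Main.v *)
Require Import Defs.
From HB Require Import structures.
From mathcomp Require Import all_boot all_order all_algebra.
From mathcomp Require Import reals ring lra.
From Stdlib Require Import FunctionalExtensionality.
From mathcomp Require Import zify.
Set Implicit Arguments. Unset Strict Implicit. Unset Printing Implicit Defensive.
Import Order.TTheory GRing.Theory Num.Theory.
Local Open Scope ring_scope.

Section S.
Variables (R : realType) (n : nat) (a : 'I_n.+1 -> R).
Hypothesis apos : forall i, 0 < a i.

Definition E (mu : R) (y z : 'I_n.+1 -> R) := \sum_i y i * z i / (a i - mu).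

Definition Dq (x v : 'I_n.+1 -> R) (mu : R) :=
  let A := \sum_i v i ^+ 2 / (a i - mu) in
  let B := \sum_i x i * v i / (a i - mu) in
  let C := \sum_i x i ^+ 2 / (a i - mu) - 1 in
  B ^+ 2 - A * C.

Lemma DqE x v mu : Dq x v mu = E mu x v ^+ 2 - E mu v v * (E mu x x - 1).
Proof.
rewrite /Dq /E; congr (_ - _ * (_ - _)); apply: eq_bigr => i _; by rewrite expr2.
Qed.

Lemma E_sym mu y z : E mu y z = E mu z y.
Proof. by apply: eq_bigr => i _; rewrite (mulrC (y i)). Qed.

Lemma E_lin mu y z w k :
  E mu (fun i => y i + k * z i) w = E mu y w + k * E mu z w.
Proof.
rewrite /E mulr_sumr -big_split; apply: eq_bigr => i _ /=.
by rewrite !mulrDl -!mulrA.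
Qed.

Lemma E_scale mu y z k : E mu (fun i => k * y i) z = k * E mu y z.
Proof.
rewrite /E mulr_sumr; apply: eq_bigr => i _ /=; by rewrite -!mulrA.
Qed.

Lemma E_linr mu y z w k :
  E mu w (fun i => y i + k * z i) = E mu w y + k * E mu w z.
Proof. by rewrite E_sym E_lin !(E_sym mu w). Qed.

Lemma E_scaler mu y z k : E mu z (fun i => k * y i) = k * E mu z y.
Proof. by rewrite E_sym E_scale E_sym. Qed.

Lemma Dq_shift x v mu t : Dq (fun i => x i + t * v i) v mu = Dq x v mu.
Proof.
rewrite !DqE !(E_lin, E_linr) (E_sym mu v x). ring.
Qed.

Lemma Dq_scale x v mu c : Dq x (fun i => c * v i) mu = c ^+ 2 * Dq x v mu.
Proof.
rewrite !DqE !(E_scale, E_scaler). ring.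
Qed.

Lemma anz i : a i != 0. Proof. by rewrite gt_eqF ?apos. Qed.

Lemma E_N mu y z : (forall i, a i != mu) ->
  mu * E mu y (fun i => z i / a i) = E mu y z - \sum_i y i * z i / a i.
Proof.
move=> hmu; rewrite /E mulr_sumr -sumrB; apply: eq_bigr => i _.
have h1 := anz i; have h2 : a i - mu != 0 by rewrite subr_eq0 hmu.
by field; rewrite h1 h2.
Qed.

Lemma Dq_reflect x v mu : on_Q a x -> mu != 0 -> (forall i, a i != mu) ->
  Dq x (reflect_in (normalQ a x) v) mu = Dq x v mu.
Proof.
move=> hx hmu0 hmu.
set N := normalQ a x.
set k := 2 * dot v N / dot N N.
have -> : reflect_in N v = (fun i => v i + (-k) * N i).
  by apply: functional_extensionality => i; rewrite /reflect_in mulNr.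
rewrite !DqE !(E_lin, E_linr) (E_sym mu N v).
set C := E mu x x - 1; set b := E mu x v; set c := E mu v v.
set e := E mu x N; set f := E mu v N; set g := E mu N N.
have He : mu * e = C.
  rewrite /e /N /normalQ E_N // /C; congr (_ - _); rewrite -hx.
  by apply: eq_bigr => i _; rewrite expr2.
have Hf : mu * f = b - dot v N.
  rewrite /f /N /normalQ E_N // /b (E_sym mu v x); congr (_ - _).
  by apply: eq_bigr => i _; rewrite mulrA.
have Hg : mu * (mu * g) = C - mu * dot N N.
  rewrite /g {1}/N /normalQ E_N // E_sym -/e mulrBr He; congr (_ - mu * _).
  by apply: eq_bigr => i _; rewrite mulrA.
have [NN0|NNn0] := eqVneq (dot N N) 0.
  have -> : k = 0 by rewrite /k NN0 invr0 mulr0.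
  ring.
have Hk : k * dot N N = 2 * dot v N by rewrite /k; field.
have hm2 : mu ^+ 2 != 0 by rewrite expf_neq0.
apply: (mulfI hm2); apply/eqP; rewrite -subr_eq0.
have -> : mu ^+ 2 * ((b + - k * e) ^+ 2 - (c + - k * f + - k * (f + - k * g)) * C) -
  mu ^+ 2 * (b ^+ 2 - c * C) = -2*k*b*mu*(mu*e) + k^+2*(mu*e)^+2 + 2*k*C*mu*(mu*f)
   - k^+2*C*(mu*(mu*g)) by ring.
rewrite He Hf Hg.
have -> : -2*k*b*mu*C + k^+2*C^+2 + 2*k*C*mu*(b - dot v N) - k^+2*C*(C - mu * dot N N)
  = k*C*mu*(k * dot N N - 2 * dot v N) by ring.
by rewrite Hk subrr mulr0.
Qed.

Definition w mu i := (a i - mu)^-1.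
Definition cc (x v : 'I_n.+1 -> R) i j := (x i * v j - x j * v i) ^+ 2.

Lemma sum2 (f g : 'I_n.+1 -> R) :
  \sum_i \sum_j f i * g j = (\sum_i f i) * (\sum_j g j).
Proof. by rewrite mulr_suml; apply: eq_bigr => i _; rewrite mulr_sumr. Qed.

Lemma Dq_sym x v mu : Dq x v mu =
  \sum_i v i ^+ 2 * w mu i - 2^-1 * \sum_i \sum_j cc x v i j * (w mu i * w mu j).
Proof.
rewrite /Dq.
change (\sum_i x i * v i / (a i - mu)) with (\sum_i x i * v i * w mu i).
change (\sum_i v i ^+ 2 / (a i - mu)) with (\sum_i v i ^+ 2 * w mu i).
change (\sum_i x i ^+ 2 / (a i - mu)) with (\sum_i x i ^+ 2 * w mu i).
have -> : \sum_i \sum_j cc x v i j * (w mu i * w mu j) =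
  \sum_i \sum_j ((x i ^+ 2 * w mu i) * (v j ^+ 2 * w mu j)) +
  \sum_i \sum_j ((v i ^+ 2 * w mu i) * (x j ^+ 2 * w mu j)) -
  2 * \sum_i \sum_j ((x i * v i * w mu i) * (x j * v j * w mu j)).
  rewrite mulr_sumr -big_split -sumrB; apply: eq_bigr => i _.
  rewrite mulr_sumr -big_split -sumrB; apply: eq_bigr => j _.
  rewrite /cc /=; ring.
by rewrite !sum2; field.
Qed.

Definition pi (S : pred 'I_n.+1) : {poly R} := \prod_(k | S k) ((a k)%:P - 'X).

Definition Pol x v : {poly R} :=
  \sum_i (v i ^+ 2) *: pi (fun k => k != i) -
  2^-1 *: \sum_i \sum_j cc x v i j *: pi (fun k => (k != i) && (k != j)).

Lemma pi_eval S mu : (pi S).[mu] = \prod_(k | S k) (a k - mu).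
Proof. by rewrite /pi horner_prod; apply: eq_bigr => k _; rewrite hornerD hornerN hornerC hornerX. Qed.

Lemma Pol_evalE x v mu : (Pol x v).[mu] =
  \sum_i v i ^+ 2 * (pi (fun k => k != i)).[mu] -
  2^-1 * \sum_i \sum_j cc x v i j * (pi (fun k => (k != i) && (k != j))).[mu].
Proof.
rewrite /Pol hornerD hornerN hornerZ !horner_sum; congr (_ - _ * _).
  by apply: eq_bigr => i _; rewrite hornerZ.
by apply: eq_bigr => i _; rewrite horner_sum; apply: eq_bigr => j _; rewrite hornerZ.
Qed.

Lemma prodD1 (S : pred 'I_n.+1) j mu : S j ->
  \prod_(k | S k) (a k - mu) = (a j - mu) * \prod_(k | S k && (k != j)) (a k - mu).
Proof. by move=> Sj; rewrite (bigD1 j). Qed.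

Lemma size_pi S : size (pi S) = #|S|.+1.
Proof.
rewrite /pi size_prod; last first.
  move=> k _; rewrite -size_poly_eq0 -opprB size_opp size_XsubC //.
under eq_bigr do rewrite -opprB size_opp size_XsubC.
rewrite sum_nat_const. set m := #|S|. rewrite -addn1 -[(m * _)%N]/(m * 2)%N. lia.
Qed.

Lemma cc_ii x v i : cc x v i i = 0.
Proof. by rewrite /cc subrr expr0n. Qed.

Section Eval.
Variable mu : R.
Hypothesis hmu : forall k, a k != mu.
Let Pi := \prod_k (a k - mu).
Lemma amu_nz k : a k - mu != 0. Proof. by rewrite subr_eq0 hmu. Qed.

Lemma pi1 i : (pi (fun k => k != i)).[mu] = Pi * w mu i.
Proof.
rewrite pi_eval /Pi [in RHS](bigD1 i) //= /w.
have h := amu_nz i.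
by field.
Qed.

Lemma pi2 i j : i != j ->
  (pi (fun k => (k != i) && (k != j))).[mu] = Pi * (w mu i * w mu j).
Proof.
move=> hij; rewrite pi_eval.
have e1 := @prodD1 (fun k => k != i) j mu ltac:(by rewrite /= eq_sym).
have e2 := pi1 i; rewrite pi_eval e1 in e2.
apply: (mulfI (amu_nz j)); rewrite e2 /w.
have h := amu_nz j; have h' := amu_nz i.
by field; rewrite h h'.
Qed.

Lemma Pol_eval x v : (Pol x v).[mu] = Dq x v mu * Pi.
Proof.
rewrite Pol_evalE Dq_sym mulrBl mulr_suml -mulrA mulr_suml; congr (_ - _ * _).
  by apply: eq_bigr => i _; rewrite pi1; ring.
apply: eq_bigr => i _; rewrite mulr_suml; apply: eq_bigr => j _.
have [->|hij] := eqVneq i j; first by rewrite cc_ii !mul0r.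
rewrite pi2 //; ring.
Qed.
End Eval.

Lemma size_sum_le (I : Type) (r : seq I) (P : pred I) (F : I -> {poly R}) m :
  (forall i, (size (F i) <= m)%N) -> (size (\sum_(i <- r | P i) F i)%R <= m)%N.
Proof.
move=> hF; apply: (big_ind (fun p : {poly R} => size p <= m)%N) => //.
- by rewrite size_poly0.
- by move=> p q hp hq; rewrite (leq_trans (size_polyD _ _)) // geq_max hp hq.
Qed.

Lemma card_ne (i : 'I_n.+1) : #|(fun k => k != i)| = n.
Proof. by have := cardC1 i; rewrite card_ord. Qed.

Lemma size_pi_le (S : pred 'I_n.+1) i : (forall k, S k -> k != i) -> (size (pi S) <= n.+1)%N.
Proof.
move=> hS; rewrite size_pi ltnS; apply: (leq_trans _ (eq_leq (card_ne i))); apply: subset_leq_card.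
by apply/subsetP => k; rewrite !unfold_in; apply: hS.
Qed.

Lemma size_Pol x v : (size (Pol x v) <= n.+1)%N.
Proof.
rewrite /Pol (leq_trans (size_polyD _ _)) // geq_max size_polyN.
apply/andP; split.
  apply: size_sum_le => i.
  by rewrite (leq_trans (size_scale_leq _ _)) // (size_pi_le (i := i)).
rewrite (leq_trans (size_scale_leq _ _)) //; apply: size_sum_le => i.
apply: size_sum_le => j.
rewrite (leq_trans (size_scale_leq _ _)) // (size_pi_le (i := i)) //.
by move=> k /andP[].
Qed.

Section A0.
Hypothesis ainj : forall k, k != ord0 -> a k != a ord0.
Let a0 := a ord0.
Let Pi' := \prod_(k | k != ord0) (a k - a0).

Lemma pi_zero (S : pred 'I_n.+1) : S ord0 -> (pi S).[a0] = 0.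
Proof. by move=> S0; rewrite pi_eval (bigD1 ord0) //= subrr mul0r. Qed.

Lemma pi_0j j : j != ord0 ->
  (pi (fun k => (k != ord0) && (k != j))).[a0] = Pi' / (a j - a0).
Proof.
move=> hj; rewrite pi_eval /Pi' (@prodD1 (fun k => k != ord0) j a0 hj).
have h : a j - a0 != 0 by rewrite subr_eq0 ainj.
by field.
Qed.

Lemma Pol_a0 x v : (Pol x v).[a0] =
  Pi' * (v ord0 ^+ 2 - \sum_(j | j != ord0) cc x v ord0 j / (a j - a0)).
Proof.
rewrite Pol_evalE (bigD1 ord0) //= big1 ?addr0; last first.
  by move=> i hi; rewrite pi_zero ?mulr0 // eq_sym.
set T := \sum_(j | j != ord0) cc x v ord0 j * (Pi' / (a j - a0)).
have H2 : \sum_(i | i != ord0) \sum_j cc x v i j *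
    (pi (fun k => (k != i) && (k != j))).[a0] = T.
  apply: eq_bigr => i hi; rewrite (bigD1 ord0) //= big1 ?addr0; last first.
    by move=> j hj; rewrite pi_zero ?mulr0 //= eq_sym hi eq_sym.
  have -> : cc x v i ord0 = cc x v ord0 i by rewrite /cc; ring.
  rewrite -pi_0j //; congr (_ * _); rewrite !pi_eval.
  by apply: eq_bigl => k; rewrite andbC.
have H1 : \sum_j cc x v ord0 j * (pi (fun k => (k != ord0) && (k != j))).[a0] = T.
  rewrite (bigD1 ord0) //= cc_ii mul0r add0r; apply: eq_bigr => j hj.
  by rewrite pi_0j.
rewrite (bigD1 ord0) //= H1 H2 pi_eval -/Pi'.
have -> : T = Pi' * \sum_(j | j != ord0) cc x v ord0 j / (a j - a0).
  rewrite /T mulr_sumr; apply: eq_bigr => j _; by rewrite mulrCA.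
by field.
Qed.
End A0.

Lemma sum_pos (S : pred 'I_n.+1) (F : 'I_n.+1 -> R) i :
  S i -> 0 < F i -> (forall j, S j -> 0 <= F j) -> 0 < \sum_(j | S j) F j.
Proof.
move=> Si Fi hF; rewrite (bigD1 i) //=; apply: ltr_pwDl => //.
by apply: sumr_ge0 => j /andP[/hF].
Qed.

Lemma E0E y z : E 0 y z = \sum_i y i * z i / a i.
Proof. by apply: eq_bigr => i _; rewrite subr0. Qed.

Lemma E0_pos v i : v i != 0 -> 0 < E 0 v v.
Proof.
move=> hv; rewrite E0E (sum_pos (i := i)) //.
  by rewrite divr_gt0 ?apos // -expr2 exprn_even_gt0.
by move=> j _; rewrite divr_ge0 ?(ltW (apos j)) // -expr2 sqr_ge0.
Qed.

Lemma chord_facts x v : on_Q a x -> on_Q a (fun i => x i + v i) ->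
  E 0 x x = 1 /\ 2 * E 0 x v + E 0 v v = 0.
Proof.
move=> hx hy.
have hxx : E 0 x x = 1 by rewrite E0E -[RHS]hx; apply: eq_bigr => i _; rewrite expr2.
split => //.
have : E 0 (fun i => x i + 1 * v i) (fun i => x i + 1 * v i) = 1.
  rewrite E0E -[RHS]hy; apply: eq_bigr => i _; rewrite /= mul1r expr2 //.
rewrite E_lin !E_linr hxx (E_sym 0 v x) => h.
move: h; set p := E 0 x v; set q := E 0 v v => h; lra.
Qed.

Lemma Dq0_pos x v i : on_Q a x -> on_Q a (fun i => x i + v i) -> v i != 0 ->
  0 < Dq x v 0.
Proof.
move=> hx hy hv; have [hxx hxv] := chord_facts hx hy.
have hA := E0_pos hv.
rewrite DqE hxx subrr mulr0 subr0.
move: hxv hA; set p := E 0 x v; set q := E 0 v v => h hq; nra.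
Qed.

Section K.
Hypothesis agt : forall k, k != ord0 -> a ord0 < a k.

Lemma K_neg x v : on_Q a x -> on_Q a (fun i => x i + v i) -> (exists i, v i != 0) ->
  ~~ ((x ord0 == 0) && (v ord0 == 0)) -> 0 <= x ord0 * (x ord0 + v ord0) ->
  v ord0 ^+ 2 - \sum_(j | j != ord0) cc x v ord0 j / (a j - a ord0) < 0.
Proof.
move=> hx hy [i hvi] hnd hsign.
have dpos j : j != ord0 -> 0 < a j - a ord0 by move=> hj; rewrite subr_gt0 agt.
have [v00|v0n] := eqVneq (v ord0) 0.
  rewrite v00 eqxx andbT in hnd.
  have hi : i != ord0 by apply: contraNneq hvi => ->; rewrite v00.
  have : 0 < \sum_(j | j != ord0) cc x v ord0 j / (a j - a ord0).
    apply: (sum_pos (i := i)) => //.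
      rewrite divr_gt0 ?dpos // /cc v00 mulr0 subr0 exprn_even_gt0 //.
      by rewrite mulf_neq0.
    by move=> j hj; rewrite divr_ge0 ?(ltW (dpos j hj)) // /cc sqr_ge0.
  rewrite v00 expr0n /=; set S := \sum_(j | _) _ => hS; lra.
have [hxx hxv] := chord_facts hx hy.
have hq : 0 < E 0 v v := E0_pos hvi.
set t0 := - x ord0 / v ord0.
set z := fun j => x j + t0 * v j.
have hz0 : z ord0 = 0 by rewrite /z /t0; field.
have ecc j : cc x v ord0 j = v ord0 ^+ 2 * z j ^+ 2 by rewrite /cc /z /t0; field.
have et : x ord0 * (x ord0 + v ord0) = t0 * (t0 - 1) * v ord0 ^+ 2 by rewrite /t0; field.
have hv2 : 0 < v ord0 ^+ 2 by rewrite exprn_even_gt0.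
have ht : 0 <= t0 * (t0 - 1).
  move: hsign hv2; rewrite et; set T := t0 * (t0 - 1); set V := v ord0 ^+ 2 => h1 h2.
  nra.
have hzz : 1 <= E 0 z z.
  rewrite /z E_lin !E_linr hxx (E_sym 0 v x).
  move: hxv hq ht; set p := E 0 x v; set q := E 0 v v => h1 h2 h3; nra.
have hzz' : E 0 z z = \sum_(j | j != ord0) z j ^+ 2 / a j.
  rewrite E0E (bigD1 ord0) //= hz0 mul0r mul0r add0r.
  by apply: eq_bigr => j _; rewrite expr2.
have [j hj] : exists j, (j != ord0) && (z j != 0).
  apply/existsP; apply: contraT; rewrite negb_exists => /forallP H.
  move: hzz; rewrite hzz' big1 ?ler10 // => j hj.
  by have := H j; rewrite hj /= negbK => /eqP ->; rewrite expr0n mul0r.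
case/andP: hj => hj hzj.
have hdiff : 0 < \sum_(k | k != ord0) (z k ^+ 2 / (a k - a ord0) - z k ^+ 2 / a k).
  apply: (sum_pos (i := j)) => //.
    have -> : z j ^+ 2 / (a j - a ord0) - z j ^+ 2 / a j =
        z j ^+ 2 * a ord0 / (a j * (a j - a ord0)).
      have h1 := anz j; have h2 : a j - a ord0 != 0 by rewrite gt_eqF ?dpos.
      by field; rewrite h1 h2.
    apply: divr_gt0; [apply: mulr_gt0; [by rewrite exprn_even_gt0 | exact: apos] | by rewrite mulr_gt0 ?apos ?dpos].
  move=> k hk.
  have -> : z k ^+ 2 / (a k - a ord0) - z k ^+ 2 / a k =
      z k ^+ 2 * a ord0 / (a k * (a k - a ord0)).
    have h1 := anz k; have h2 : a k - a ord0 != 0 by rewrite gt_eqF ?dpos.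
    by field; rewrite h1 h2.
  apply: divr_ge0; [apply: mulr_ge0; [exact: sqr_ge0 | exact: ltW (apos _)] | by rewrite mulr_ge0 ?(ltW (apos _)) ?(ltW (dpos k hk))].
rewrite sumrB -hzz' in hdiff.
have -> : \sum_(j | j != ord0) cc x v ord0 j / (a j - a ord0) =
    v ord0 ^+ 2 * \sum_(k | k != ord0) z k ^+ 2 / (a k - a ord0).
  by rewrite mulr_sumr; apply: eq_bigr => k _; rewrite ecc mulrA.
move: hdiff hzz hv2; set S := \sum_(k | _) _; set V := v ord0 ^+ 2 => h1 h2 h3.
nra.
Qed.

Lemma ainj_of k : k != ord0 -> a k != a ord0.
Proof. by move=> hk; rewrite gt_eqF ?agt. Qed.

Lemma Pol0_pos x v i : on_Q a x -> on_Q a (fun i => x i + v i) -> v i != 0 ->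
  0 < (Pol x v).[0].
Proof.
move=> hx hy hv; rewrite Pol_eval; last by move=> k; rewrite anz.
by rewrite mulr_gt0 ?(Dq0_pos hx hy hv) // prodr_gt0 // => k _; rewrite subr0 apos.
Qed.

Lemma chord x v : on_Q a x -> on_Q a (fun i => x i + v i) -> (exists i, v i != 0) ->
  ~~ ((x ord0 == 0) && (v ord0 == 0)) ->
  (forall mu, 0 < mu < a ord0 -> Dq x v mu != 0) ->
  x ord0 * (x ord0 + v ord0) < 0.
Proof.
move=> hx hy hv hnd hD; rewrite ltNge; apply/negP => hsign.
have [i hvi] := hv.
have hP0 := Pol0_pos hx hy hvi.
have hPa : (Pol x v).[a ord0] < 0.
  rewrite (Pol_a0 ainj_of).
  have hK := K_neg hx hy hv hnd hsign.
  have hPi : 0 < \prod_(k | k != ord0) (a k - a ord0).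
    by apply: prodr_gt0 => k hk; rewrite subr_gt0 agt.
  by rewrite pmulr_rlt0.
have ha0 : 0 <= a ord0 by rewrite ltW ?apos.
have [mu /andP[hm1 hm2]] := @poly_ivt R (- Pol x v) 0 (a ord0) ha0
  ltac:(by rewrite !hornerN oppr_le0 oppr_ge0 ?ltW).
rewrite rootN => /eqP hroot.
have hmu0 : mu != 0 by apply/eqP => e; move: hroot; rewrite e; apply/eqP; rewrite gt_eqF.
have hmua : mu != a ord0 by apply/eqP => e; move: hroot; rewrite e; apply/eqP; rewrite lt_eqF.
have hmu : forall k, a k != mu.
  move=> k; have [->|hk] := eqVneq k ord0; first by rewrite eq_sym.
  by rewrite gt_eqF // (le_lt_trans hm2) ?agt.
move: hroot; rewrite Pol_eval // => /eqP; rewrite mulf_eq0 => /orP[hD0|].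
  have h1 : 0 < mu by rewrite lt_neqAle eq_sym hmu0 hm1.
  have h2 : mu < a ord0 by rewrite lt_neqAle hmua hm2.
  by have := hD mu; rewrite h1 h2 hD0 => /(_ isT).
by rewrite prodf_seq_eq0 => /hasP[k _ /=]; rewrite subr_eq0 (negPf (hmu k)).
Qed.

Lemma degenerate x v i (lam : 'I_n -> R) :
  on_Q a x -> on_Q a (fun i => x i + v i) -> v i != 0 ->
  x ord0 = 0 -> v ord0 = 0 ->
  (forall i j : 'I_n, (i < j)%N -> lam i < lam j) ->
  (forall j, Dq x v (lam j) = 0) -> (forall j k, a k != lam j) -> False.
Proof.
move=> hx hy hvi hx0 hv0 hinc hD hne.
have hP0 := Pol0_pos hx hy hvi.
have hPn0 : Pol x v != 0 by apply: contraTneq hP0 => ->; rewrite horner0 ltxx.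
set rs := a ord0 :: [seq lam j | j <- enum 'I_n].
have hlinj : injective lam.
  move=> j k e; apply/eqP; apply: contraT => hjk.
  case: (ltngtP j k) => h.
  - by have := hinc _ _ h; rewrite e ltxx.
  - by have := hinc _ _ h; rewrite e ltxx.
  - by move: hjk; rewrite (val_inj h) eqxx.
have huniq : uniq rs.
  rewrite /= map_inj_uniq ?enum_uniq // andbT.
  by apply/mapP => -[j _ /eqP]; rewrite (negPf (hne j ord0)).
have hroots : all (root (Pol x v)) rs.
  have hPa : (Pol x v).[a ord0] = 0.
    have hS : \sum_(j | j != ord0) cc x v ord0 j / (a j - a ord0) = 0.
      by apply: big1 => j _; rewrite /cc hx0 hv0 mul0r mulr0 subrr expr0n mul0r.
    by rewrite (Pol_a0 ainj_of) hv0 hS expr0n subrr mulr0.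
  rewrite /= {1}/root hPa eqxx /=.
  apply/allP => _ /mapP[j _ ->]; rewrite /root Pol_eval ?hD ?mul0r //.
by have := max_poly_roots hPn0 hroots huniq; rewrite /= size_map size_enum_ord ltnNge size_Pol.
Qed.
End K.
End S.

Theorem corollary1 (R : realType) (n : nat) (hn : (0 < n)%N)
  (a : 'I_n.+1 -> R) (ha0 : 0 < a ord0)
  (ha : forall i j : 'I_n.+1, (i < j)%N -> a i < a j)
  (p : nat -> 'I_n.+1 -> R) (hp : billiard_traj a p)
  (lam : 'I_n -> R) (hlam : caustic_params a (p 0%N) (seg p 0%N) lam)
  (hns : nonsingular a lam)
  (m : nat) (hm : odd m) (hper : forall k, p (k + m)%N = p k) :
  forall i : 'I_n, (i : nat) = 0%N -> 0 < lam i < a ord0.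
Proof.
move=> i hi0.
have agt : forall k, k != ord0 -> a ord0 < a k.
  move=> k hk; apply: ha; rewrite lt0n; move: hk; apply: contraNneq => h.
  by apply/eqP; apply: val_inj.
have apos : forall k, 0 < a k.
  move=> k; have [->|hk] := eqVneq k ord0 => //; exact: lt_trans (agt k hk).
have hlam0 : 0 < lam i by apply: hns.1.
rewrite hlam0 /=.
have hin0 : inord 0 = ord0 :> 'I_n.+1 by apply: val_inj; rewrite /= inordK.
have := hns.2 i; rewrite hi0 /apaper hin0 => -[/andP[_ //]|/andP[hgt _]].
exfalso.
have lamgt : forall j, a ord0 < lam j.
  move=> j; apply: (lt_le_trans hgt).
  have [hj|hj] := eqVneq (j : nat) 0%N.
    by rewrite (_ : j = i) // ; apply: val_inj; rewrite /= hj hi0.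
  by apply: ltW; apply: hlam.1; rewrite hi0 lt0n.
case: hp => hQ [hne hrefl].
have segnz : forall k, exists j, seg p k j != 0.
  move=> k; apply/existsP; apply: contraT; rewrite negb_exists => /forallP H.
  exfalso; apply: (hne k); apply: functional_extensionality => j.
  by have := H j; rewrite negbK /seg subr_eq0 => /eqP.
have hpS : forall k, p k.+1 = (fun j => p k j + 1 * seg p k j).
  by move=> k; apply: functional_extensionality => j; rewrite /seg mul1r addrC subrK.
have hQS : forall k, on_Q a (fun j => p k j + seg p k j).
  move=> k; have := hQ k.+1; rewrite hpS.
  by congr (on_Q a _); apply: functional_extensionality => j; rewrite mul1r.
have hD0 : forall mu, 0 < mu < a ord0 -> Dq a (p 0%N) (seg p 0%N) mu != 0.
  move=> mu /andP[h1 h2]; apply/eqP => hD.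
  have hmu : forall k, a k != mu.
    move=> k; have [->|hk] := eqVneq k ord0; first by rewrite gt_eqF.
    by rewrite gt_eqF // (lt_trans h2) ?agt.
  have [j hj] := (hlam.2 mu).1 (conj hmu hD).
  by have := lamgt j; rewrite hj ltNge (ltW h2).
have hDk : forall k mu, 0 < mu < a ord0 -> Dq a (p k) (seg p k) mu != 0.
  move=> k mu hmu; elim: k => [|k IH]; first exact: hD0.
  have [h1 h2] := andP hmu.
  have hmuk : forall k, a k != mu.
    move=> k'; have [->|hk] := eqVneq k' ord0; first by rewrite gt_eqF.
    by rewrite gt_eqF // (lt_trans h2) ?agt.
  have [c [hc ->]] := hrefl k.
  rewrite Dq_scale Dq_reflect //; last by rewrite gt_eqF.
  by rewrite [in X in Dq _ X _]hpS Dq_shift mulf_neq0 // expf_neq0 // gt_eqF.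
have htan : forall j, tangent_confocal a (p 0%N) (seg p 0%N) (lam j).
  by move=> j; apply: (hlam.2 (lam j)).2; exists j.
have nd0 : ~~ ((p 0%N ord0 == 0) && (seg p 0%N ord0 == 0)).
  apply/negP => /andP[/eqP hx0 /eqP hv0].
  have [j0 hj0] := segnz 0%N.
  apply: (degenerate apos agt (hQ 0%N) (hQS 0%N) hj0 hx0 hv0 hlam.1).
    by move=> j; exact: (proj2 (htan j)).
  by move=> j k; exact: (proj1 (htan j) k).
have ndk : forall k, ~~ ((p k ord0 == 0) && (seg p k ord0 == 0)).
  elim=> [//|k IH]; apply/negP => /andP[/eqP hx0 /eqP hv0].
  move/negP: IH; apply; have [c [hc hs]] := hrefl k.
  have hv : seg p k ord0 = 0.
    move: hv0; rewrite hs /reflect_in /normalQ hx0 mul0r mulr0 subr0 => /eqP.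
    by rewrite mulf_eq0 gt_eqF //= => /eqP.
  by rewrite hv eqxx andbT; move: hx0; rewrite /seg in hv; rewrite -(subrK (p k ord0) (p k.+1 ord0)) hv add0r => ->.
have flip : forall k, p k ord0 * p k.+1 ord0 < 0.
  move=> k; have [j hj] := segnz k.
  have := chord apos agt (hQ k) (hQS k) (ex_intro _ j hj) (ndk k) (fun mu h => hDk k mu h).
  by congr (_ < _); congr (_ * _); rewrite /seg addrC subrK.
have par : forall k, (if odd k then p k ord0 * p 0%N ord0 < 0 else 0 < p k ord0 * p 0%N ord0).
  elim=> [|k IH].
    have := flip 0%N; set x0 := p 0%N ord0; set x1 := p 1%N ord0 => h /=; nra.
  have := flip k; rewrite /=; move: IH.
  case: (odd k) => /=; set u := p k ord0; set w := p k.+1 ord0; set z := p 0%N ord0 => h1 h2; nra.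
have := par m; rewrite hm -{1}(add0n m) hper.
set z := p 0%N ord0 => h; nra.
Qed.
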